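(* For every $n\ge 3$, the graph $C_n\times K_2$ is a cubic admissible graph.
   Context: $C_n\times K_2$ is the cartesian product of the cycle of order $n$ with $K_2$ (the prism on $2n$ vertices). A trail is a walk with no repeated edge; its length is its number of edges, and it spans a graph if it contains every vertex. $t(L)$ denotes the length of a longest trail in $L$. A (multi)graph $L$ is admissible if (A-1) $t(L)<|E(L)|$, and (A-2) for each vertex $v\in V(L)$ and each edge $e$ incident with $v$, there is a trail of length $t(L)$ beginning $v,e,\ldots$ which spans $L$. *)

(* Defs.v *)
From mathcomp Require Import all_boot.
Set Implicit Arguments. Unset Strict Implicit. Unset Printing Implicit Defensive.

Section Graphs.
Variable T : finType.
Variable adj : rel T.

Definition simple_graph : Prop :=
  symmetric adj /\ irreflexive adj.

Definition edge_of (x y : T) : {set T} := [set x; y].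

Definition edge_set : {set {set T}} :=
  [set edge_of p.1 p.2 | p in [pred p : T * T | adj p.1 p.2]].

Definition cubic : Prop := forall x : T, #|[set y | adj x y]| = 3.

Definition walk_edges (x : T) (p : seq T) : seq {set T} :=
  pairmap edge_of x p.

(* x :: p is a trail: a walk with no repeated edge; its length is size p *)
Definition trail (x : T) (p : seq T) : bool :=
  path adj x p && uniq (walk_edges x p).

Definition spans (x : T) (p : seq T) : bool :=
  [forall v : T, v \in x :: p].

Definition longest_trail_length (t : nat) : Prop :=
  (exists x p, trail x p /\ size p = t) /\
  (forall x p, trail x p -> size p <= t).

Definition admissible : Prop :=
  exists t : nat, longest_trail_length t /\
    t < #|edge_set| /\
    (forall v w : T, adj v w ->
       exists p : seq T, trail v (w :: p) /\ size (w :: p) = t /\ spans v (w :: p)).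

End Graphs.

(* The prism C_n x K_2: vertices (i, b) with i in Z_n, b in K_2;
   (i,b) ~ (j,c) iff (b = c and i, j adjacent on the cycle) or (i = j and b <> c). *)
Definition cyc_adj (n : nat) (i j : 'I_n) : bool :=
  (val j == (val i).+1 %% n) || (val i == (val j).+1 %% n).

Definition prism_adj (n : nat) : rel ('I_n * bool) :=
  fun u v => ((u.2 == v.2) && cyc_adj u.1 v.1) || ((u.1 == v.1) && (u.2 != v.2)).
Arguments cyc_adj : clear implicits.
Arguments prism_adj : clear implicits.

(* Main.v *)
Require Import Defs.
From mathcomp Require Import all_boot.
From mathcomp Require Import zify.
Set Implicit Arguments. Unset Strict Implicit. Unset Printing Implicit Defensive.

Section Gen.
Variable T : finType.
Variable adj : rel T.

Lemma edge_ofC (a b : T) : edge_of a b = edge_of b a.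
Proof. by rewrite /edge_of setUC. Qed.

Lemma path_fun (G : nat -> T) L m :
  (forall k, m <= k -> k < m + L -> adj (G k) (G k.+1)) ->
  path adj (G m) [seq G i | i <- iota m.+1 L].
Proof.
elim: L m => [|L IH] m H //=.
rewrite H ?IH //; try lia.
by move=> k h1 h2; apply: H; lia.
Qed.

Lemma pairmap_fun (G : nat -> T) L m :
  pairmap (@edge_of T) (G m) [seq G i | i <- iota m.+1 L] =
  [seq edge_of (G k) (G k.+1) | k <- iota m L].
Proof. by elim: L m => [|L IH] m //=; rewrite IH. Qed.

Lemma uniq_fun (f : nat -> {set T}) L :
  (forall k l, k < l -> l < L -> f k != f l) ->
  uniq [seq f k | k <- iota 0 L].
Proof.
move=> H; rewrite map_inj_in_uniq ?iota_uniq //.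
move=> k l; rewrite !mem_iota => /andP[_ hk] /andP[_ hl] E.
case: (ltngtP k l) => // h.
  by move: (H k l h); rewrite E eqxx; lia.
by move: (H l k h); rewrite E eqxx; lia.
Qed.

Lemma trail_fun (G : nat -> T) L :
  (forall k, k < L -> adj (G k) (G k.+1)) ->
  (forall k l, k < l -> l < L -> edge_of (G k) (G k.+1) != edge_of (G l) (G l.+1)) ->
  trail adj (G 0) [seq G i | i <- iota 1 L].
Proof.
move=> H1 H2; rewrite /trail /walk_edges path_fun /=; last first.
  by move=> k _ h; apply: H1.
by rewrite pairmap_fun; apply: uniq_fun.
Qed.

Lemma edge_of_eq (u1 u2 w1 w2 : T) : edge_of u1 u2 = edge_of w1 w2 ->
  (u1 = w1 /\ u2 = w2) \/ (u1 = w2 /\ u2 = w1).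
Proof.
move=> E.
have h1 : u1 \in edge_of w1 w2 by rewrite -E /edge_of !inE eqxx.
have h2 : u2 \in edge_of w1 w2 by rewrite -E /edge_of !inE eqxx orbT.
have h3 : w1 \in edge_of u1 u2 by rewrite E /edge_of !inE eqxx.
have h4 : w2 \in edge_of u1 u2 by rewrite E /edge_of !inE eqxx orbT.
move: h1 h2 h3 h4; rewrite /edge_of !inE.
case/orP=> /eqP e1; case/orP=> /eqP e2; subst => //; auto;
  case/orP=> /eqP e3; case/orP=> /eqP e4; subst; auto.
Qed.

Hypothesis sym : symmetric adj.
Hypothesis irr : irreflexive adj.
Hypothesis deg : forall v, #|[set y | adj v y]| <= 3.

Lemma interior_neq x p k l : trail adj x p -> 1 <= k -> k < l -> l < size p ->
  nth x (x :: p) k != nth x (x :: p) l.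
Proof.
case/andP=> /(pathP x) hp hu hk hkl hl; apply/negP => /eqP E.
set s := x :: p in E.
have A : forall i, i < size p -> adj (nth x s i) (nth x s i.+1) by move=> i /hp.
have Ed : forall i, i < size p ->
  nth set0 (walk_edges x p) i = edge_of (nth x s i) (nth x s i.+1).
  by move=> i hi; rewrite /walk_edges (nth_pairmap x).
set v := nth x s k.
have hl1 : l != k.+1.
  apply/eqP=> el; have hk2 : k < size p by lia.
  by move: (A k hk2); rewrite E el irr.
have sz : size (walk_edges x p) = size p by rewrite /walk_edges size_pairmap.
have D : forall i j, i < size p -> j < size p -> i != j ->
   nth set0 (walk_edges x p) i != nth set0 (walk_edges x p) j.
  by move=> i j hi hj; rewrite nth_uniq ?sz.
set w1 := nth x s k.-1. set w2 := nth x s k.+1.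
set w3 := nth x s l.-1. set w4 := nth x s l.+1.
have e1 : nth set0 (walk_edges x p) k.-1 = edge_of v w1.
  by rewrite Ed; [rewrite prednK // edge_ofC | lia].
have e2 : nth set0 (walk_edges x p) k = edge_of v w2 by rewrite Ed //; lia.
have e3 : nth set0 (walk_edges x p) l.-1 = edge_of v w3.
  rewrite Ed; last lia. rewrite prednK; last lia. by rewrite edge_ofC /v E.
have e4 : nth set0 (walk_edges x p) l = edge_of v w4 by rewrite Ed // /v E.
have a1 : adj v w1 by rewrite sym /v -[in k](@prednK k) //; apply: A; lia.
have a2 : adj v w2 by apply: A; lia.
have a3 : adj v w3 by rewrite sym /v E -[in l](@prednK l) //; [apply: A|]; lia.
have a4 : adj v w4 by rewrite /v E; apply: A.
have U : uniq [:: w1; w2; w3; w4].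
  have neq : forall a b i j, nth set0 (walk_edges x p) i = edge_of v a ->
     nth set0 (walk_edges x p) j = edge_of v b -> i < size p -> j < size p -> i != j -> a != b.
    move=> a b i j ei ej hi hj hij; apply/eqP=> eab; move: (D i j hi hj hij).
    by rewrite ei ej eab eqxx.
  rewrite /= !inE !negb_or; repeat (apply/andP; split); try done;
  first [ apply: (neq _ _ _ _ e1 e2); lia | apply: (neq _ _ _ _ e1 e3); lia
        | apply: (neq _ _ _ _ e1 e4); lia | apply: (neq _ _ _ _ e2 e3); lia
        | apply: (neq _ _ _ _ e2 e4); lia | apply: (neq _ _ _ _ e3 e4); lia ].
have : #|[:: w1; w2; w3; w4]| <= #|[set y | adj v y]|.
  apply: subset_leq_card; apply/subsetP => y; rewrite !inE.
  by case/or4P=> /eqP ->.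
rewrite (card_uniqP U) /=; move: (deg v); lia.
Qed.

Lemma trail_size_bound x p : trail adj x p -> size p <= #|T|.+1.
Proof.
move=> ht.
set s := [seq nth x (x :: p) k | k <- iota 1 (size p).-1].
have U : uniq s.
  rewrite map_inj_in_uniq ?iota_uniq //.
  move=> k l; rewrite !mem_iota => /andP[h1 h2] /andP[h3 h4] E.
  case: (ltngtP k l) => // h.
    have hl : l < size p by lia.
    by move: (interior_neq ht h1 h hl); rewrite E eqxx.
  have hl : k < size p by lia.
  by move: (interior_neq ht h3 h hl); rewrite E eqxx.
move: (max_card (mem s)); rewrite (card_uniqP U) size_map size_iota; lia.
Qed.

End Gen.
From mathcomp Require Import all_boot.
From mathcomp Require Import zify.
Set Implicit Arguments. Unset Strict Implicit. Unset Printing Implicit Defensive.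

Section Prism.
Variable n : nat.
Hypothesis hn : 3 <= n.
Lemma n_gt0 : 0 < n. Proof. lia. Qed.
Definition ord (i : nat) : 'I_n := Ordinal (ltn_pmod i n_gt0).
Definition sg (c : nat) (be : bool) (u : nat * bool) : 'I_n * bool :=
  (ord (u.1 + c), addb u.2 be).

Definition ncyc (i j : nat) : bool :=
  (j == i.+1) || ((i == n.-1) && (j == 0)) || (i == j.+1) || ((j == n.-1) && (i == 0)).
Definition nadj (u w : nat * bool) : bool :=
  ((u.2 == w.2) && ncyc u.1 w.1) || ((u.1 == w.1) && (u.2 != w.2)).

Lemma modS_lem i c j : i < n -> j < n ->
  ((j + c) %% n == ((i + c) %% n).+1 %% n) = (j == i.+1) || ((i == n.-1) && (j == 0)).
Proof.
move=> hi hj.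
rewrite -[((i + c) %% n).+1]addn1 modnDml addnAC eqn_modDr addn1 (modn_small hj).
have [h|h] : i.+1 < n \/ i.+1 = n by lia.
  rewrite (modn_small h); lia.
rewrite h modnn; lia.
Qed.

Lemma ord_eq c i j : i < n -> j < n -> (ord (i + c) == ord (j + c)) = (i == j).
Proof. by move=> hi hj; rewrite -val_eqE /= eqn_modDr !modn_small. Qed.

Lemma sg_adj c be u w : u.1 < n -> w.1 < n ->
  prism_adj n (sg c be u) (sg c be w) = nadj u w.
Proof.
case: u w => [i b] [j d] /= hi hj.
rewrite /prism_adj /cyc_adj /= !modS_lem // ord_eq // /nadj /ncyc /=.
case: b; case: d; case: be => /=; lia.
Qed.

Lemma sg_inj c be u w : u.1 < n -> w.1 < n -> sg c be u = sg c be w -> u = w.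
Proof.
case: u w => [i b] [j d] /= hi hj [] E1 E2.
have : (i + c) %% n == (j + c) %% n by rewrite E1.
rewrite eqn_modDr !modn_small // => /eqP ->.
by move: E2; case: b; case: d; case: be.
Qed.

Lemma sg_surj c be y : c < n -> exists u, u.1 < n /\ sg c be u = y.
Proof.
move=> hc; exists ((y.1 + (n - c)) %% n, addb y.2 be); split.
  by rewrite /= ltn_pmod // n_gt0.
case: y => [y b]; rewrite /sg /= addbK; congr (_, _).
apply: val_inj => /=.
rewrite modnDml -addnA subnK; last lia.
by rewrite modnDr modn_small.
Qed.

Lemma trail_sg c be (g : nat -> nat * bool) L :
 (forall k, k <= L -> (g k).1 < n) ->
 (forall k, k < L -> nadj (g k) (g k.+1)) ->
 (forall k l, k < l -> l < L ->
    ~ ((g k = g l /\ g k.+1 = g l.+1) \/ (g k = g l.+1 /\ g k.+1 = g l))) ->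
 trail (prism_adj n) (sg c be (g 0)) [seq sg c be (g i) | i <- iota 1 L].
Proof.
move=> B A D.
apply: (trail_fun (G := fun k => sg c be (g k))).
  by move=> k hk; rewrite sg_adj ?A ?B //; lia.
move=> k l hkl hl; apply/negP => /eqP /edge_of_eq H; apply: (D k l hkl hl).
case: H => [[E1 E2]|[E1 E2]]; [left|right];
  split; apply: (sg_inj (c := c) (be := be)); rewrite ?B //; lia.
Qed.

Lemma spans_sg c be (g : nat -> nat * bool) L : c < n ->
 (forall u, u.1 < n -> exists2 k, k <= L & g k = u) ->
 spans (sg c be (g 0)) [seq sg c be (g i) | i <- iota 1 L].
Proof.
move=> hc S; apply/forallP => y.
have [u [hu <-]] := sg_surj be y hc.
have [k hk <-] := S u hu.
have -> : sg c be (g 0) :: [seq sg c be (g i) | i <- iota 1 L] =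
          [seq sg c be (g i) | i <- iota 0 L.+1] by [].
apply/mapP; exists k => //; rewrite mem_iota; lia.
Qed.

Ltac split_ifs := repeat (case: ifP => ?; try (exfalso; lia)).

Definition g1 k : nat * bool :=
  if k < n then (k, false) else if k == n then (0, false)
  else if k <= n + n then (k - n.+1, true) else (n.-1, false).

Lemma g1_B k : k <= (n + n).+1 -> (g1 k).1 < n.
Proof. move=> ?; rewrite /g1; split_ifs; simpl; lia. Qed.
Lemma g1_A k : k < (n + n).+1 -> nadj (g1 k) (g1 k.+1).
Proof. rewrite /g1 => ?; split_ifs; rewrite /nadj /ncyc /=; lia. Qed.
Lemma g1_D k l : k < l -> l < (n + n).+1 ->
    ~ ((g1 k = g1 l /\ g1 k.+1 = g1 l.+1) \/ (g1 k = g1 l.+1 /\ g1 k.+1 = g1 l)).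
Proof.
rewrite /g1 => ? ?; split_ifs; case=> [[E1 E2]|[E1 E2]]; (try case: E1); intros; (try case: E2); intros; lia.
Qed.

Lemma g1_S u : u.1 < n -> exists2 k, k <= (n + n).+1 & g1 k = u.
Proof.
case: u => i [] /= hi.
  exists (n.+1 + i); first lia.
  rewrite /g1; split_ifs; congr (_, _); lia.
exists i; first lia.
rewrite /g1; split_ifs; congr (_, _); lia.
Qed.

Definition g2 k : nat * bool :=
  if k == 0 then (0, false) else if k <= n then (k.-1, true)
  else if k <= n + n then (n + n - k, false) else (n.-1, false).

Lemma g2_B k : k <= (n + n).+1 -> (g2 k).1 < n.
Proof. move=> ?; rewrite /g2; split_ifs; simpl; lia. Qed.
Lemma g2_A k : k < (n + n).+1 -> nadj (g2 k) (g2 k.+1).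
Proof. rewrite /g2 => ?; split_ifs; rewrite /nadj /ncyc /=; lia. Qed.
Lemma g2_D k l : k < l -> l < (n + n).+1 ->
    ~ ((g2 k = g2 l /\ g2 k.+1 = g2 l.+1) \/ (g2 k = g2 l.+1 /\ g2 k.+1 = g2 l)).
Proof.
rewrite /g2 => ? ?; split_ifs; case=> [[E1 E2]|[E1 E2]]; (try case: E1); intros; (try case: E2); intros; lia.
Qed.
Lemma g2_S u : u.1 < n -> exists2 k, k <= (n + n).+1 & g2 k = u.
Proof.
case: u => i [] /= hi.
  exists i.+1; first lia.
  rewrite /g2; split_ifs; congr (_, _); lia.
exists (n + n - i); first lia.
rewrite /g2; split_ifs; congr (_, _); lia.
Qed.

Definition g3 k : nat * bool :=
  if k == 0 then (0, false) else if k < n then (n - k, false)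
  else if k == n then (0, false) else if k == n.+1 then (0, true)
  else if k <= n + n then ((n + n).+1 - k, true) else (1, false).

Lemma g3_B k : k <= (n + n).+1 -> (g3 k).1 < n.
Proof. move=> ?; rewrite /g3; split_ifs; simpl; lia. Qed.
Lemma g3_A k : k < (n + n).+1 -> nadj (g3 k) (g3 k.+1).
Proof. rewrite /g3 => ?; split_ifs; rewrite /nadj /ncyc /=; lia. Qed.
Lemma g3_D k l : k < l -> l < (n + n).+1 ->
    ~ ((g3 k = g3 l /\ g3 k.+1 = g3 l.+1) \/ (g3 k = g3 l.+1 /\ g3 k.+1 = g3 l)).
Proof.
rewrite /g3 => ? ?; split_ifs; case=> [[E1 E2]|[E1 E2]]; (try case: E1); intros; (try case: E2); intros; lia.
Qed.
Lemma g3_S u : u.1 < n -> exists2 k, k <= (n + n).+1 & g3 k = u.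
Proof.
case: u => i [] /= hi.
  case: (posnP i) => [->|hi0].
    exists n.+1; first lia.
    rewrite /g3; split_ifs; congr (_, _); lia.
  exists ((n + n).+1 - i); first lia.
  rewrite /g3; split_ifs; congr (_, _); lia.
case: (posnP i) => [->|hi0].
  by exists 0.
exists (n - i); first lia.
rewrite /g3; split_ifs; congr (_, _); lia.
Qed.

Definition e1 k : nat * bool :=
  if k < n then (k, false) else if k < n + n then (k - n, true) else (k - (n + n), false).
Definition e2 k : nat * bool :=
  if k < n then (if k.+1 == n then 0 else k.+1, false)
  else if k < n + n then (if (k - n).+1 == n then 0 else (k - n).+1, true)
  else (k - (n + n), true).

Lemma e_B k : k < n + n + n -> (e1 k).1 < n /\ (e2 k).1 < n.
Proof. move=> ?; rewrite /e1 /e2; split_ifs; simpl; lia. Qed.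
Lemma e_A k : k < n + n + n -> nadj (e1 k) (e2 k).
Proof. rewrite /e1 /e2 => ?; split_ifs; rewrite /nadj /ncyc /=; lia. Qed.
Lemma e_D k l : k < l -> l < n + n + n ->
    ~ ((e1 k = e1 l /\ e2 k = e2 l) \/ (e1 k = e2 l /\ e2 k = e1 l)).
Proof.
rewrite /e1 /e2 => ? ?; split_ifs; case=> [[E1 E2]|[E1 E2]]; (try case: E1); intros; (try case: E2); intros; lia.
Qed.


Lemma sg_eq c be u w : u.1 < n -> w.1 < n -> (sg c be u == sg c be w) = (u == w).
Proof. by move=> hu hw; apply/eqP/eqP => [/sg_inj|->]; [apply| ]. Qed.

Lemma sg_base (x : 'I_n * bool) : x = sg x.1 x.2 (0, false).
Proof.
case: x => [i b]; rewrite /sg /= ?addbF; congr (_, _); apply: val_inj => /=.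
by rewrite add0n modn_small.
Qed.

Lemma all_sg (P : 'I_n * bool -> Prop) c be : c < n ->
  (forall u, u.1 < n -> P (sg c be u)) -> forall y, P y.
Proof. by move=> hc H y; have [u [hu <-]] := sg_surj be y hc; apply: H. Qed.

Lemma prism_simple : simple_graph (prism_adj n).
Proof.
have h0 : 0 < n by lia.
split.
  move=> x; move: x.
  apply: (@all_sg (fun x => forall y, prism_adj n x y = prism_adj n y x) 0 false h0) => u hu.
  apply: (@all_sg (fun y => prism_adj n _ y = prism_adj n y _) 0 false h0) => w hw.
  rewrite !sg_adj //; rewrite /nadj /ncyc; case: u w hu hw => [i b] [j d] /= ? ?.
  case: b; case: d => /=; lia.
move=> x; move: x.
apply: (@all_sg (fun x => prism_adj n x x = false) 0 false h0) => u hu.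
rewrite sg_adj //; rewrite /nadj /ncyc; case: u hu => [i b] /= ?.
case: b => /=; lia.
Qed.

Lemma prism_cubic : cubic (prism_adj n).
Proof.
move=> x; rewrite [x]sg_base.
set c := val x.1; set be := x.2.
have hc : c < n by apply: ltn_ord.
set s3 := [:: sg c be (1, false); sg c be (n.-1, false); sg c be (0, true)].
have U : uniq s3.
  rewrite /s3 /= !inE !sg_eq /=; try lia.
  rewrite !xpair_eqE /=; lia.
rewrite (_ : 3 = size s3) // -(card_uniqP U); apply: eq_card.
apply: (@all_sg (fun y => (y \in [set y0 | prism_adj n (sg c be (0, false)) y0]) = (y \in s3)) c be hc) => u hu.
have h0 : 0 < n by lia. have h1 : 1 < n by lia. have h2 : n.-1 < n by lia.
rewrite /s3 !inE sg_adj ?h0 // !(sg_eq _ _ hu) /= ?h0 ?h1 ?h2 //.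
case: u hu => [j d] /= hj; rewrite /nadj /ncyc !xpair_eqE /=.
case: d => /=; lia.
Qed.

Lemma card_T : #|{: 'I_n * bool}| = n + n.
Proof. by rewrite card_prod card_ord card_bool; lia. Qed.

Lemma adm_from (g : nat -> nat * bool) c be u : c < n ->
  g 0 = (0, false) -> g 1 = u ->
  (forall k, k <= (n + n).+1 -> (g k).1 < n) ->
  (forall k, k < (n + n).+1 -> nadj (g k) (g k.+1)) ->
  (forall k l, k < l -> l < (n + n).+1 ->
    ~ ((g k = g l /\ g k.+1 = g l.+1) \/ (g k = g l.+1 /\ g k.+1 = g l))) ->
  (forall u, u.1 < n -> exists2 k, k <= (n + n).+1 & g k = u) ->
  exists p, trail (prism_adj n) (sg c be (0, false)) (sg c be u :: p) /\
     size (sg c be u :: p) = (n + n).+1 /\ spans (sg c be (0, false)) (sg c be u :: p).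
Proof.
move=> hc H0 H1 B A D S.
exists [seq sg c be (g i) | i <- iota 2 (n + n)].
have E : sg c be u :: [seq sg c be (g i) | i <- iota 2 (n + n)] =
         [seq sg c be (g i) | i <- iota 1 (n + n).+1] by rewrite /= H1.
rewrite E -H0 size_map size_iota; split; last split=> //.
  exact: trail_sg.
exact: spans_sg.
Qed.

Lemma prism_admissible : admissible (prism_adj n).
Proof.
have [sym irr] := prism_simple.
have h0 : 0 < n by lia.
exists (n + n).+1; split; last split.
- split.
    exists (sg 0 false (g1 0)), [seq sg 0 false (g1 i) | i <- iota 1 (n + n).+1].
    by rewrite size_map size_iota; split=> //; apply: trail_sg; [apply: g1_B|apply: g1_A|apply: g1_D].
  move=> x p ht; have := trail_size_bound sym irr _ ht.
  rewrite card_T; apply.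
  by move=> v; rewrite prism_cubic.
- set s := [seq edge_of (sg 0 false (e1 k)) (sg 0 false (e2 k)) | k <- iota 0 (n + n + n)].
  have U : uniq s.
    apply: uniq_fun => k l hkl hl; apply/negP => /eqP /edge_of_eq H.
    have hk : k < n + n + n by lia.
    have [b1 b2] := e_B hk.
    have [b3 b4] := e_B hl.
    apply: (e_D hkl hl).
    by case: H => [[E1 E2]|[E1 E2]]; [left|right]; split; apply: (sg_inj (c := 0) (be := false)).
  have : #|s| <= #|edge_set (prism_adj n)|.
    apply: subset_leq_card; apply/subsetP => y /mapP [k]; rewrite mem_iota => /andP [_ hk] ->.
    apply/imsetP; exists (sg 0 false (e1 k), sg 0 false (e2 k)) => //.
    have [b1 b2] := e_B hk.
    by rewrite inE /= sg_adj // e_A.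
  rewrite (card_uniqP U) size_map size_iota; lia.
- move=> v w; rewrite [v]sg_base.
  set c := val v.1; set be := v.2.
  have hc : c < n by apply: ltn_ord.
  move: w; apply: (@all_sg (fun w => prism_adj n (sg c be (0, false)) w ->
     exists p, trail (prism_adj n) (sg c be (0, false)) (w :: p) /\
     size (w :: p) = (n + n).+1 /\ spans (sg c be (0, false)) (w :: p)) c be hc) => u hu.
  rewrite sg_adj //.
  case: u hu => [j d] /= hj; rewrite /nadj /ncyc /= => Hadj.
  have [[-> ->]|[[-> ->]|[-> ->]]] : (d = false /\ j = 1) \/ (d = false /\ j = n.-1) \/ (d = true /\ j = 0).
    by move: Hadj; case: d => /=; lia.
  + apply: (adm_from (g := g1)) => //;
      first [exact: g1_B | exact: g1_A | exact: g1_D | exact: g1_S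
            | by rewrite /g1; split_ifs; try (congr (_,_); lia)].
  + apply: (adm_from (g := g3)) => //;
      first [exact: g3_B | exact: g3_A | exact: g3_D | exact: g3_S
            | by rewrite /g3; split_ifs; try (congr (_,_); lia)].
  + apply: (adm_from (g := g2)) => //;
      first [exact: g2_B | exact: g2_A | exact: g2_D | exact: g2_S
            | by rewrite /g2; split_ifs; try (congr (_,_); lia)].
Qed.

Lemma main_sec : simple_graph (prism_adj n) /\ cubic (prism_adj n) /\ admissible (prism_adj n).
Proof. split; [exact: prism_simple | split; [exact: prism_cubic | exact: prism_admissible]]. Qed.

End Prism.

Theorem lemma2p7 (n : nat) (hn : 3 <= n) :
  simple_graph (prism_adj n) /\ cubic (prism_adj n) /\ admissible (prism_adj n).
Proof. exact: main_sec hn. Qed.
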